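(* Let $K$ be a field containing $\mathbb{Q}$ and $n\in\mathbb{N}^+$. Then $\Gamma_n\cong A_n$ as $K$-algebras.
   Context: $\Gamma$ denotes the set of all functions $\mathbb{N}^+\to K$ with pointwise addition and the convolution product $(fg)(m)=\sum_{ab=m}f(a)g(b)$; $\Gamma_n=\{f\in\Gamma: f(m)=0\ \forall m>n\}$ with the truncated product $(fg)(m)=\sum_{ab=m}f(a)g(b)$ for $m\le n$ and $0$ for $m>n$. $X=\{x_1,x_2,\dots\}$, $\mathcal{M}$ is the free commutative monoid on $X$, and $K[[X]]$ is the ring of all functions $\mathcal{M}\to K$. The weight of $x_1^{a_1}\cdots x_k^{a_k}$ is $p_1^{a_1}\cdots p_k^{a_k}$, $p_i$ the $i$-th prime. $I_n\subseteq K[[X]]$ is the set of power series supported on monomials of weight $>n$ (the monomial ideal generated by monomials of weight $>n$), and $A_n=K[[X]]/I_n$. *)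

(* Defs.v *)
From HB Require Import structures.
From mathcomp Require Import all_boot all_order all_algebra.
From Stdlib Require Import ClassicalEpsilon.
Set Implicit Arguments. Unset Strict Implicit. Unset Printing Implicit Defensive.
Import GRing.Theory.
Local Open Scope ring_scope.

(* ---------- primes p_1 = 2, p_2 = 3, ... (0-indexed: nthprime 0 = 2) ---------- *)
Lemma nextprime_ex (m : nat) : exists p : nat, (m < p)%N && prime p.
Proof. by case: (prime_above m) => p H1 H2; exists p; rewrite H1 H2. Qed.

Definition nextprime (m : nat) : nat := ex_minn (nextprime_ex m).

Fixpoint nthprime (k : nat) : nat :=
  match k with 0 => 2%N | k'.+1 => nextprime (nthprime k') end.

(* A monomial x_1^{a_1} ... x_k^{a_k} is its exponent sequence [:: a_1; ...; a_k]
   without trailing zeros. *)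
Definition monom := {s : seq nat | last 1%N s != 0%N}.

Fixpoint strip (s : seq nat) : seq nat :=
  match s with
  | [::] => [::]
  | x :: t => let t' := strip t in
              if (t' == [::]) && (x == 0%N) then [::] else x :: t'
  end.

Lemma strip_ok (s : seq nat) : last 1%N (strip s) != 0%N.
Proof.
elim: s => [|x t IH] //=.
case E: (strip t) IH => [|y u] /= IH.
  by case: x.
by [].
Qed.

Definition nrm (s : seq nat) : monom := exist _ (strip s) (strip_ok s).

(* all exponent sequences d of the same length as s with d_i <= s_i
   (these represent exactly the divisors of the monomial s) *)
Fixpoint divs (s : seq nat) : seq (seq nat) :=
  match s with
  | [::] => [:: [::]]
  | x :: t => [seq i :: u | i <- iota 0 x.+1, u <- divs t]
  end.

(* the cofactor s / d *)
Definition cosub (s d : seq nat) : seq nat := [seq (p.1 - p.2)%N | p <- zip s d].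

Definition weight (m : monom) : nat :=
  (\prod_(i < size (val m)) (nthprime i) ^ (nth 0%N (val m) i))%N.

Section PowerSeries.
Variable K : fieldType.

Definition pser := monom -> K.

Definition ps_add (f g : pser) : pser := fun m => f m + g m.
Definition ps_scale (c : K) (f : pser) : pser := fun m => c * f m.
Definition ps_mul (f g : pser) : pser :=
  fun m => \sum_(d <- divs (val m)) f (nrm d) * g (nrm (cosub (val m) d)).
Definition ps_one : pser := fun m => if val m == [::] then 1 else 0.

Definition In_ideal (n : nat) (f : pser) : Prop :=
  forall m : monom, (weight m <= n)%N -> f m = 0.

(* A_n = K[[X]] / I_n : the type of cosets f + I_n *)
Definition coset (n : nat) (f : pser) : pser -> Prop :=
  fun g => In_ideal n (fun m => g m - f m).

Definition An (n : nat) := {S : pser -> Prop | exists f : pser, S = coset n f}.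

Definition An_of (n : nat) (f : pser) : An n :=
  exist _ (coset n f) (ex_intro _ f erefl).

Definition An_rep (n : nat) (a : An n) : pser :=
  proj1_sig (constructive_indefinite_description _ (proj2_sig a)).

Definition An_add (n : nat) (a b : An n) : An n :=
  An_of n (ps_add (An_rep a) (An_rep b)).
Definition An_scale (n : nat) (c : K) (a : An n) : An n :=
  An_of n (ps_scale c (An_rep a)).
Definition An_mul (n : nat) (a b : An n) : An n :=
  An_of n (ps_mul (An_rep a) (An_rep b)).
Definition An_one (n : nat) : An n := An_of n ps_one.

(* Functions N^+ -> K are encoded as functions nat -> K whose (junk) value
   at 0 is 0; Gamma_n = those vanishing at every m > n. *)
Definition Gamma (n : nat) :=
  {f : nat -> K | forall m : nat, ~~ (0 < m <= n)%N -> f m = 0}.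

Definition trunc (n : nat) (f : nat -> K) : nat -> K :=
  fun m => if (0 < m <= n)%N then f m else 0.

Lemma trunc_ok (n : nat) (f : nat -> K) :
  forall m : nat, ~~ (0 < m <= n)%N -> trunc n f m = 0.
Proof. by move=> m /negbTE H; rewrite /trunc H. Qed.

Definition mkG (n : nat) (f : nat -> K) : Gamma n :=
  exist _ (trunc n f) (@trunc_ok n f).

Definition G_add (n : nat) (f g : Gamma n) : Gamma n :=
  mkG n (fun m => proj1_sig f m + proj1_sig g m).
Definition G_scale (n : nat) (c : K) (f : Gamma n) : Gamma n :=
  mkG n (fun m => c * proj1_sig f m).
Definition G_mul (n : nat) (f g : Gamma n) : Gamma n :=
  mkG n (fun m => \sum_(d <- divisors m) proj1_sig f d * proj1_sig g (m %/ d)%N).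
Definition G_one (n : nat) : Gamma n := mkG n (fun m => (m == 1%N)%:R).

End PowerSeries.

(* Main.v *)
Require Import Defs.
From HB Require Import structures.
From mathcomp Require Import all_boot all_order all_algebra.
From Stdlib Require Import ClassicalEpsilon ProofIrrelevance FunctionalExtensionality PropExtensionality.
Import GRing.Theory.


Lemma nthprime_prime k : prime (nthprime k).
Proof. case: k => [|k] //=; rewrite /nextprime; by case: ex_minnP => m /andP[]. Qed.

Lemma nthprime_ltS k : (nthprime k < nthprime k.+1)%N.
Proof. rewrite /= /nextprime; by case: ex_minnP => m /andP[]. Qed.

Lemma nthprime_lt j k : (j < k)%N -> (nthprime j < nthprime k)%N.
Proof.
elim: k => [|k IH] //; rewrite ltnS leq_eqVlt => /orP[/eqP->|/IH H].
  exact: nthprime_ltS.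
exact: ltn_trans H (nthprime_ltS k).
Qed.

Lemma nthprime_bracket m : (2 <= m)%N -> exists i, (nthprime i <= m < nthprime i.+1)%N.
Proof.
elim: m => [|m IH] //; rewrite leq_eqVlt => /orP[/eqP<-|].
  by exists 0%N; exact: (nthprime_ltS 0).
rewrite ltnS => /IH [i /andP[H1 H2]].
case: (ltnP m.+1 (nthprime i.+1)) => H3.
  by exists i; rewrite H3 (leq_trans H1).
exists i.+1; have E : nthprime i.+1 = m.+1 by apply/eqP; rewrite eqn_leq H2 H3.
by rewrite -E leqnn (nthprime_ltS i.+1).
Qed.

Lemma prime_nth p : prime p -> exists i, nthprime i = p.
Proof.
move=> pp; have [i /andP[H1 H2]] := nthprime_bracket _ (prime_gt1 pp).
exists i; apply/eqP; rewrite eqn_leq H1 /=.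
move: H2; rewrite /= /nextprime; case: ex_minnP => m _ Hm Hlt.
rewrite leqNgt; apply/negP => Hl.
have := Hm p; rewrite Hl pp => /(_ isT); by rewrite leqNgt Hlt.
Qed.

Fixpoint wt (k : nat) (s : seq nat) : nat :=
  match s with [::] => 1%N | x :: t => (nthprime k ^ x * wt k.+1 t)%N end.

Lemma wt_prod k s : (\prod_(i < size s) (nthprime (k + i)) ^ (nth 0%N s i))%N = wt k s.
Proof.
elim: s k => [|x t IH] k /=; first by rewrite big_ord0.
rewrite big_ord_recl addn0 -IH; congr (_ * _)%N.
by apply: eq_bigr => i _; rewrite /bump /= add0n addnS.
Qed.

Lemma weightE m : weight m = wt 0 (val m).
Proof. by rewrite /weight -wt_prod. Qed.

Lemma wt_gt0 k s : (0 < wt k s)%N.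
Proof.
elim: s k => [|x t IH] k //=; rewrite muln_gt0 IH andbT expn_gt0.
by rewrite prime_gt0 ?nthprime_prime.
Qed.

Lemma wt_strip k s : wt k (strip s) = wt k s.
Proof.
elim: s k => [|x t IH] k //=.
case: ifP => [/andP[/eqP E /eqP ->]|_] /=; last by rewrite IH.
by rewrite -IH E /= mul1n.
Qed.

Lemma coprime_wt j k s : (j < k)%N -> coprime (nthprime j) (wt k s).
Proof.
elim: s k => [|x t IH] k jk /=; first exact: coprimen1.
rewrite coprimeMr IH ?(ltn_trans jk) // andbT coprimeXr //.
rewrite prime_coprime ?nthprime_prime // dvdn_prime2 ?nthprime_prime //.
by rewrite neq_ltn nthprime_lt.
Qed.

Lemma logn_wt k a t : logn (nthprime k) (wt k (a :: t)) = a.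
Proof.
rewrite /= lognM ?wt_gt0 ?expn_gt0 ?prime_gt0 ?nthprime_prime //.
rewrite (logn_coprime (@coprime_wt k k.+1 t (ltnSn k))) addn0 lognX logn_prime ?nthprime_prime //.
by rewrite eqxx muln1.
Qed.

Lemma wt1 k s : wt k s = 1%N -> forall i, nth 0%N s i = 0%N.
Proof.
elim: s k => [|x t IH] k /=; first by move=> _ [|i]. 
move=> /eqP; rewrite muln_eq1 => /andP[H1 /eqP H2] [|i] /=.
  apply/eqP; rewrite -(eqn_exp2l _ _ (prime_gt1 (nthprime_prime k))) expn0 //.
exact: (IH _ H2).
Qed.

Lemma wt_nth k s s' : wt k s = wt k s' -> forall i, nth 0%N s i = nth 0%N s' i.
Proof.
elim: s k s' => [|x t IH] k [|y t'] E i.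
- by [].
- by rewrite nth_nil (wt1 _ _ (esym E)).
- by rewrite nth_nil (wt1 _ _ E).
have exy : x = y by rewrite -(logn_wt k x t) E logn_wt.
subst y; move: E => /= /eqP; rewrite eqn_pmul2l ?expn_gt0 ?prime_gt0 ?nthprime_prime //.
move=> /eqP E; case: i => [|i] //=; exact: IH E i.
Qed.

Lemma divs_size s d : d \in divs s -> size d = size s.
Proof.
elim: s d => [|x t IH] d; first by rewrite inE => /eqP->.
move=> H; have := H; case/allpairsPdep => [i [u [_ Hu ->]]] /=; by rewrite (IH u Hu).
Qed.

Lemma divs_uniq s : uniq (divs s).
Proof.
elim: s => [|x t IH] //.
apply: allpairs_uniq_dep; first exact: iota_uniq.
  by move=> *.
by move=> [a b] [c d] _ _ /= [-> ->].
Qed.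

Lemma wt_cosub k s d : d \in divs s -> wt k s = (wt k d * wt k (cosub s d))%N.
Proof.
elim: s k d => [|x t IH] k d; first by rewrite inE => /eqP->.
case/allpairsPdep => [i [u [Hi Hu ->]]] /=.
rewrite (IH k.+1 u Hu) mulnACA -expnD subnKC //.
by move: Hi; rewrite mem_iota add0n ltnS.
Qed.

Lemma dvd_divs k s x : (x %| wt k s)%N -> exists2 d, d \in divs s & x = wt k d.
Proof.
elim: s k x => [|a t IH] k x /=.
  by rewrite dvdn1 => /eqP->; exists [::]; rewrite ?inE.
move=> Hx; set p := nthprime k.
have pp : prime p by apply: nthprime_prime.
have x0 : (0 < x)%N.
  by case: x Hx => // ; rewrite dvd0n => /eqP E; have := wt_gt0 k (a :: t); rewrite /= E.
have He : (logn p x <= a)%N.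
  by rewrite -[X in (_ <= X)%N](logn_wt k a t); apply: dvdn_leq_log => //; apply: wt_gt0.
have Hc : coprime (p ^ a) (x`_p^').
  by apply: (pnat_coprime (pi := p)); [rewrite pnatX pnat_id | apply: part_pnat].
have Hd : (x`_p^' %| wt k.+1 t)%N.
  have Hc2 : coprime (x`_p^') (p ^ a) by rewrite coprime_sym.
  rewrite -(Gauss_dvdr _ Hc2).
  by apply: dvdn_trans Hx; rewrite /= -{2}(partnC p x0) dvdn_mull.
have [d' Hd' E] := IH _ _ Hd.
exists (logn p x :: d').
  change (logn p x :: d' \in [seq i :: u | i <- iota 0 a.+1, u <- divs t]).
  apply/allpairsPdep; exists (logn p x), d'; split => //; by rewrite mem_iota add0n ltnS.
by rewrite /= -E -/p -p_part partnC.
Qed.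

Lemma wt_incr k s i : wt k (incr_nth s i) = (nthprime (k + i) * wt k s)%N.
Proof.
elim: i k s => [|i IH] k [|x t] /=.
- by rewrite addn0 expn1 muln1.
- by rewrite addn0 expnS mulnA.
- have E : ncons i 0 [:: 1] = incr_nth [::] i by case: i {IH}.
  by rewrite E IH expn0 mul1n addSnnS.
- by rewrite (IH k.+1 t : wt k.+1 (incr_nth t i) = _) addSnnS mulnCA.
Qed.

Lemma wt_surj N : (0 < N)%N -> exists s, wt 0 s = N.
Proof.
elim: N {-2}N (leqnn N) => [|N IH] M HM M0; first by case: M HM M0.
case: (ltnP 1 M) => H1; last first.
  by exists [::]; apply/eqP; rewrite eqn_leq H1 M0.
have pp := pdiv_prime H1; have [i Ei] := prime_nth _ pp.
have HM' : (M %/ pdiv M <= N)%N.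
  rewrite -ltnS (leq_trans _ HM) // ltn_Pdiv ?prime_gt1 //.
have Hpos : (0 < M %/ pdiv M)%N by rewrite divn_gt0 ?prime_gt0 // dvdn_leq // pdiv_dvd.
have [s Es] := IH _ HM' Hpos.
by exists (incr_nth s i); rewrite wt_incr Es add0n Ei muln_divCA ?pdiv_dvd // divnn prime_gt0 // muln1.
Qed.

Lemma weight_gt0 m : (0 < weight m)%N.
Proof. by rewrite weightE wt_gt0. Qed.

Lemma weight_inj : injective weight.
Proof.
move=> [s Hs] [s' Hs']; rewrite !weightE /= => /wt_nth E.
have Hsz : forall u v : seq nat, last 1%N u != 0%N -> (forall i, nth 0%N u i = nth 0%N v i) -> (size u <= size v)%N.
  move=> u v Hu Huv; rewrite leqNgt; apply/negP => Hlt.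
  have u0 : (0 < size u)%N by apply: leq_ltn_trans Hlt.
  move: Hu; case: u u0 Huv Hlt => // y u _ Huv Hlt.
  rewrite (_ : last 1%N (y :: u) = last 0%N (y :: u)) // -nth_last Huv nth_default //.
move: (Hsz _ _ Hs E) (Hsz _ _ Hs' (fun i => esym (E i))) => H1 H2.
have Es : s = s'.
  by apply: (@eq_from_nth _ 0%N); [apply/eqP; rewrite eqn_leq H1 H2 | move=> i _; apply: E].
subst s'; by rewrite (bool_irrelevance Hs Hs').
Qed.

Local Open Scope ring_scope.

Lemma exist_eq (A : Type) (P : A -> Prop) x y (p : P x) (q : P y) :
  x = y -> exist P x p = exist P y q.
Proof. move=> E; subst y; by rewrite (proof_irrelevance _ p q). Qed.

Lemma monom_ex k : exists m : monom, (0 < k)%N -> weight m = k.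
Proof.
case: k => [|k]; first by exists (nrm [::]).
have [s Es] := wt_surj k.+1 isT.
by exists (nrm s) => _; rewrite weightE /= wt_strip.
Qed.

Definition monom_of k : monom := proj1_sig (constructive_indefinite_description _ (monom_ex k)).

Lemma monom_ofK k : (0 < k)%N -> weight (monom_of k) = k.
Proof. rewrite /monom_of; by case: constructive_indefinite_description. Qed.

Lemma weightK m : monom_of (weight m) = m.
Proof. by apply: weight_inj; rewrite monom_ofK // weight_gt0. Qed.

Section Alg.
Variables (K : fieldType) (n : nat).

Lemma An_of_eq (f g : pser K) : (forall m, (weight m <= n)%N -> f m = g m) ->
  An_of n f = An_of n g.
Proof.
move=> H; apply: exist_eq; apply: functional_extensionality => h.
apply: propositional_extensionality; rewrite /coset /In_ideal.
by split=> Hh m Hm; [rewrite -(H m Hm) | rewrite (H m Hm)]; apply: Hh.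
Qed.

Lemma An_repP (f : pser K) m : (weight m <= n)%N -> An_rep (An_of n f) m = f m.
Proof.
move=> Hm; rewrite /An_rep; case: constructive_indefinite_description => r /= E.
have : coset n f r by rewrite E /coset /In_ideal => m' _; rewrite subrr.
by move=> /(_ m Hm) /eqP; rewrite subr_eq0 => /eqP.
Qed.

Lemma An_ofK (a : An K n) : An_of n (An_rep a) = a.
Proof.
case: a => S HS; rewrite /An_rep /=; case: constructive_indefinite_description => r /= E.
by apply: exist_eq.
Qed.

End Alg.

Lemma mul_key (K : fieldType) (F : nat -> nat -> K) (s : seq nat) :
  \sum_(d <- divisors (wt 0 s)) F d (wt 0 s %/ d)%N =
  \sum_(d <- divs s) F (wt 0 d) (wt 0 (cosub s d)).
Proof.
rewrite (eq_big_seq (fun d => F (wt 0 d) (wt 0 s %/ wt 0 d)%N)); last first.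
  by move=> d Hd; rewrite (wt_cosub 0 s d Hd) mulKn ?wt_gt0.
rewrite -(big_map (wt 0) xpredT (fun e => F e (wt 0 s %/ e)%N)).
apply: perm_big; apply: uniq_perm; rewrite ?divisors_uniq //.
  rewrite map_inj_in_uniq ?divs_uniq // => d1 d2 H1 H2 E.
  apply: (@eq_from_nth _ 0%N); first by rewrite (divs_size _ _ H1) (divs_size _ _ H2).
  by move=> i _; apply: wt_nth E i.
move=> x; rewrite -dvdn_divisors ?wt_gt0 //; apply/idP/idP.
  by move=> /dvd_divs [d Hd ->]; apply: map_f.
by case/mapP=> d Hd ->; rewrite (wt_cosub 0 s d Hd) dvdn_mulr.
Qed.

Theorem mainTheorem5 (K : fieldType) (hK : [pchar K]%R =i pred0) (n : nat)
    (hn : (0 < n)%N) :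
  exists phi : Gamma K n -> An K n,
    bijective phi /\
    (forall f g : Gamma K n, phi (G_add f g) = An_add (phi f) (phi g)) /\
    (forall (c : K) (f : Gamma K n), phi (G_scale c f) = An_scale c (phi f)) /\
    (forall f g : Gamma K n, phi (G_mul f g) = An_mul (phi f) (phi g)) /\
    phi (G_one K n) = An_one K n.
Proof.
have Wpos := weight_gt0.
have Tr : forall (F : nat -> K) m, (weight m <= n)%N -> trunc n F (weight m) = F (weight m).
  by move=> F m Hm; rewrite /trunc Wpos Hm.
exists (fun f : Gamma K n => An_of n (fun m => proj1_sig f (weight m))).
split; last split; last split; last split.
- exists (fun a => mkG n (fun k => An_rep a (monom_of k))).
    case=> g Hg; apply: exist_eq; apply: functional_extensionality => k.
    rewrite /trunc; case: ifP => H.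
      by case/andP: H => H0 Hk; rewrite An_repP monom_ofK.
    by rewrite Hg ?H.
  move=> a; rewrite -[RHS]An_ofK; apply: An_of_eq => m Hm /=.
  by rewrite Tr // weightK.
- move=> f g; apply: An_of_eq => m Hm /=.
  by rewrite Tr // /ps_add !An_repP.
- move=> c f; apply: An_of_eq => m Hm /=.
  by rewrite Tr // /ps_scale !An_repP.
- move=> f g; apply: An_of_eq => m Hm /=.
  rewrite Tr // /ps_mul weightE (@mul_key K (fun a b => sval f a * sval g b)); apply: eq_big_seq => d Hd.
  have Hdv : (wt 0 d %| wt 0 (val m))%N by rewrite (wt_cosub 0 _ d Hd) dvdn_mulr.
  have Hcv : (wt 0 (cosub (val m) d) %| wt 0 (val m))%N by rewrite (wt_cosub 0 _ d Hd) dvdn_mull.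
  rewrite !An_repP ?weightE /= ?wt_strip //.
    by apply: leq_trans (dvdn_leq (wt_gt0 _ _) Hcv) _; rewrite -weightE.
  by apply: leq_trans (dvdn_leq (wt_gt0 _ _) Hdv) _; rewrite -weightE.
- apply: An_of_eq => m Hm /=; rewrite Tr // /ps_one.
  case: m Hm => s Hs Hm /=.
  case: ifP => [/eqP Es|/eqP Hne].
    by subst s; rewrite weightE.
  case: eqP => // E; exfalso; apply: Hne.
  have := @weight_inj (exist _ s Hs) (nrm [::]); rewrite E weightE /= => /(_ erefl).
  by case.
Qed.
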